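(* Let $n\in\mathbb{N}$. If $\mathbf{s}=(s_0,\ldots,s_n)\subset[0,\infty)$ is strictly positive on $(0,\infty)$, then $T_\infty(\mathbf{s})=\infty$.
   Context: For $a<b$, $\mathbf{s}$ is strictly positive on $[a,b]$ if the functional $\sigma(x^k)=s_k$ on real polynomials of degree $\le n$ satisfies $\sigma(P)\ge0$ for all $P\ge0$ on $[a,b]$ and $\sigma(P)>0$ for all such $P\not\equiv0$; strictly positive on $(0,\infty)$ means strictly positive on some $[a,b]\subset(0,\infty)$. $\mathcal{M}_{a,b}(\mathbf{s})$ is the set of positive Borel measures on $[a,b]$ with $k$-th moments $s_k$; $T_{a,b}(\mathbf{s})=\sup\{\int_{[a,b]}\frac1t\,d\mu:\mu\in\mathcal{M}_{a,b}(\mathbf{s})\}$ (with $\sup\varnothing=-\infty$) and $T_\infty(\mathbf{s})=\sup_{0<a<b}T_{a,b}(\mathbf{s})$. *)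

(* Defs.v *)
From HB Require Import structures.
From mathcomp Require Import all_boot all_order all_algebra.
From mathcomp Require Import all_classical all_reals all_analysis.
Set Implicit Arguments. Unset Strict Implicit. Unset Printing Implicit Defensive.
Import Order.TTheory GRing.Theory Num.Theory.
Local Open Scope classical_set_scope.
Local Open Scope ring_scope.

Definition sigma (R : realType) (n : nat) (s : 'I_n.+1 -> R) (P : {poly R}) : R :=
  \sum_(k < n.+1) P`_k * s k.

Definition strictly_pos_on (R : realType) (n : nat) (s : 'I_n.+1 -> R) (a b : R) : Prop :=
  a < b /\
  forall P : {poly R}, (size P <= n.+1)%N ->
    (forall x, a <= x <= b -> 0 <= P.[x]) ->
    0 <= sigma s P /\ (P != 0 -> 0 < sigma s P).

Definition strictly_pos_on_pos (R : realType) (n : nat) (s : 'I_n.+1 -> R) : Prop :=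
  exists a b : R, 0 < a /\ strictly_pos_on s a b.

(* M_{a,b}(s): positive Borel measures on [a,b] (represented as Borel measures
   on R carried by [a,b]) whose k-th moments are s_k, k = 0..n. *)
Definition moment_measures (R : realType) (n : nat) (s : 'I_n.+1 -> R) (a b : R)
  : set {measure set R -> \bar R} :=
  [set mu | mu (~` `[a, b]) = 0%E /\
    forall k : 'I_n.+1, (\int[mu]_(x in `[a, b]) ((x ^+ k)%:E) = (s k)%:E)%E].

(* T_{a,b}(s) = sup { int_{[a,b]} 1/t dmu : mu in M_{a,b}(s) }  (sup of empty = -oo). *)
Definition T_ab (R : realType) (n : nat) (s : 'I_n.+1 -> R) (a b : R) : \bar R :=
  ereal_sup [set (\int[mu]_(x in `[a, b]) ((x^-1)%:E))%E | mu in moment_measures s a b].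

Definition T_infty (R : realType) (n : nat) (s : 'I_n.+1 -> R) : \bar R :=
  ereal_sup [set T_ab s ab.1 ab.2 | ab in [set ab : R * R | 0 < ab.1 /\ ab.1 < ab.2]].

(* Main.v *)
Require Import Defs.
From HB Require Import structures.
From mathcomp Require Import all_boot all_order all_algebra.
From mathcomp Require Import all_classical all_reals all_analysis.
From mathcomp Require Import measurable_realfun.
From mathcomp Require Import zify ring lra.
Import Order.TTheory GRing.Theory Num.Theory.
Local Open Scope classical_set_scope.
Local Open Scope ring_scope.

Section Alg.
Variable R : rcfType.
Implicit Types (P Q : {poly R}).

Definition linF (L : {poly R} -> R) := forall (c : R) P Q, L (c *: P + Q) = c * L P + L Q.
Definition spos (L : {poly R} -> R) (d : nat) (a b : R) := forall P, (size P <= d)%N ->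
  (forall x, a <= x <= b -> 0 <= P.[x]) -> P != 0 -> 0 < L P.
Definition rep (L : {poly R} -> R) (d : nat) (S : seq (R * R)) := forall P, (size P <= d)%N ->
  L P = \sum_(p <- S) p.2 * P.[p.1].

Section Lin.
Variable L : {poly R} -> R.
Hypothesis hL : linF L.
Lemma lin0 : L 0 = 0.
Proof.
have := hL 1 0 0; rewrite scale1r addr0 mul1r => h.
have : L 0 + L 0 - L 0 = L 0 - L 0 by rewrite -h.
by rewrite addrK subrr.
Qed.
Lemma linD P Q : L (P + Q) = L P + L Q.
Proof. by have := hL 1 P Q; rewrite scale1r mul1r. Qed.
Lemma linZ c P : L (c *: P) = c * L P.
Proof. by have := hL c P 0; rewrite !addr0 lin0 addr0. Qed.
Lemma linN P : L (- P) = - L P.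
Proof. by rewrite -scaleN1r linZ mulN1r. Qed.
Lemma linB P Q : L (P - Q) = L P - L Q.
Proof. by rewrite linD linN. Qed.
Lemma lin_sum I (r : seq I) (Pr : pred I) (F : I -> {poly R}) :
  L (\sum_(i <- r | Pr i) F i) = \sum_(i <- r | Pr i) L (F i).
Proof. exact: (big_morph L linD lin0). Qed.
End Lin.
Arguments lin0 {L}. Arguments linD {L}. Arguments linZ {L}. Arguments linN {L}. Arguments linB {L}. Arguments lin_sum {L}.

Lemma ivt_strict (p : {poly R}) (u v : R) : u <= v -> p.[u] < 0 -> 0 < p.[v] ->
  exists z, u < z < v /\ root p z.
Proof.
move=> uv pu pv.
have hh : p.[u] <= 0 <= p.[v] by rewrite (ltW pu) (ltW pv).
have [z /andP [uz zv] rz] := poly_ivt uv hh.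
exists z; split => //.
have zu : z != u by apply: contraTneq rz => ->; rewrite /root (lt_eqF pu).
have zv' : z != v by apply: contraTneq rz => ->; rewrite /root (gt_eqF pv).
by rewrite !lt_neqAle uz zv (eq_sym u) zu zv'.
Qed.

Lemma signlem (a b : R) (w : {poly R}) : exists Y : seq R,
  [/\ uniq Y, (forall y, y \in Y -> a < y < b /\ root w y) &
   (forall x, a <= x <= b -> 0 <= (w * \prod_(y <- Y) ('X - y%:P)).[x]) \/
   (forall x, a <= x <= b -> (w * \prod_(y <- Y) ('X - y%:P)).[x] <= 0)].
Proof.
move: {2}(size w) (leqnn (size w)) => N; elim: N w => [|N IH] w hw.
  have -> : w = 0 by apply/eqP; rewrite -size_poly_eq0; lia.
  by exists [::]; split => //; left => x _; rewrite mul0r horner0.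
have [-> | wn0] := eqVneq w 0.
  by exists [::]; split => //; left => x _; rewrite mul0r horner0.
case: (pselect (exists y, a < y < b /\ root w y)) => [[y [yab ry]]|nr].
  set w1 := w %/ ('X - y%:P).
  have ew : w = w1 * ('X - y%:P) by rewrite divpK // dvdp_XsubCl.
  have sw1 : (size w1 <= N)%N.
    rewrite /w1 size_divp ?polyXsubC_eq0 // size_XsubC succnK leq_subLR; exact: hw.
  have [Y1 [uY1 hY1 hs]] := IH w1 sw1.
  have rw z : root w1 z -> root w z by rewrite ew rootM => ->.
  have [yY1|yY1] := boolP (y \in Y1).
    exists (rem y Y1); split; first exact: rem_uniq.
      by move=> z /mem_rem /hY1 [? ?]; split => //; exact: rw.
    have -> : w * \prod_(z <- rem y Y1) ('X - z%:P) = w1 * \prod_(z <- Y1) ('X - z%:P).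
      by rewrite (perm_big _ (perm_to_rem yY1)) big_cons ew mulrA.
    exact: hs.
  exists (y :: Y1); split; first by rewrite /= yY1 uY1.
    move=> z; rewrite in_cons => /orP [/eqP -> //| /hY1 [? ?]]; split => //; exact: rw.
  have E x : (w * \prod_(z <- y :: Y1) ('X - z%:P)).[x] =
       (w1 * \prod_(z <- Y1) ('X - z%:P)).[x] * (x - y) ^+ 2.
    by rewrite big_cons ew !hornerM hornerXsubC; ring.
  case: hs => hs; [left|right] => x xab; rewrite E.
    by apply: mulr_ge0; [exact: hs | exact: sqr_ge0].
  by apply: mulr_le0_ge0; [exact: hs | exact: sqr_ge0].
exists [::]; split => //; rewrite big_nil mulr1.
have [h|h] := pselect (forall x, a <= x <= b -> 0 <= w.[x]); [by left|right].
move=> x xab; rewrite leNgt; apply/negP => wx.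
move/existsNP: h => [x2 /not_implyP [x2ab /negP]]; rewrite -ltNge => wx2.
case/andP: xab => ax xb; case/andP: x2ab => ax2 x2b.
have [x2x|xx2] := leP x2 x.
  have [z [/andP [z1 z2] rz]] := @ivt_strict w x2 x x2x wx2 wx.
  apply: nr; exists z; split => //; apply/andP; split.
  - exact: le_lt_trans ax2 z1.
  - exact: lt_le_trans z2 xb.
have h1 : (- w).[x] < 0 by rewrite hornerN oppr_lt0.
have h2 : 0 < (- w).[x2] by rewrite hornerN oppr_gt0.
have [z [/andP [z1 z2] rz]] := @ivt_strict (- w) x x2 (ltW xx2) h1 h2.
apply: nr; exists z; split; last by rewrite -rootN.
apply/andP; split; [exact: le_lt_trans ax z1|exact: lt_le_trans z2 x2b].
Qed.

Section Gauss.
Variable L : {poly R} -> R.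
Hypothesis hL : linF L.

Lemma ortho k (a b : R) : spos L (2 * k) a b ->
  exists w : {poly R}, [/\ size w = k.+1, lead_coef w = 1 &
    forall Q, (size Q <= k)%N -> L (w * Q) = 0].
Proof.
move=> hp.
pose H : 'M[R]_k := \matrix_(i, j) L 'X^(i + j).
pose qv (v : 'rV[R]_k) : {poly R} := \sum_(i < k) v 0 i *: 'X^i.
have sqv v : (size (qv v) <= k)%N.
  rewrite /qv; apply: (big_ind (fun p : {poly R} => (size p <= k)%N)).
  - by rewrite size_poly0.
  - by move=> p1 p2 h1 h2; apply: leq_trans (size_polyD _ _) _; rewrite geq_max h1 h2.
  - by move=> i _; apply: leq_trans (size_scale_leq _ _) _; rewrite size_polyXn.
have qvc v (j : 'I_k) : (qv v)`_j = v 0 j.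
  rewrite /qv coef_sum (bigD1 j) //= coefZ coefXn eqxx mulr1 big1 ?addr0 // => i ij.
  have ij' : (i : nat) != j := ij.
  by rewrite coefZ coefXn eq_sym (negbTE ij') mulr0.
have qvX v (j : 'I_k) : L (qv v * 'X^j) = (v *m H) 0 j.
  rewrite /qv mulr_suml (lin_sum hL) mxE.
  by apply: eq_bigr => i _; rewrite -scalerAl -exprD (linZ hL) mxE.
have inj (v : 'rV[R]_k) : v *m H = 0 -> v = 0.
  move=> vH.
  have h0 : L (qv v * qv v) = 0.
    rewrite {2}/qv mulr_sumr (lin_sum hL) big1 // => j _.
    by rewrite -scalerAr (linZ hL) qvX vH mxE mulr0.
  have qq : qv v * qv v == 0.
    apply/negPn/negP => nz.
    have s2 : (size (qv v * qv v)%R <= 2 * k)%N.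
      by apply: leq_trans (size_polyMleq _ _) _; have := sqv v; lia.
    have p2 : forall x, a <= x <= b -> 0 <= (qv v * qv v).[x].
      by move=> x _; rewrite hornerM -expr2 sqr_ge0.
    by have := hp _ s2 p2 nz; rewrite h0 ltxx.
  rewrite mulf_eq0 orbb in qq.
  by apply/rowP => j; have := qvc v j; rewrite (eqP qq) coef0 mxE => <-.
have Hu : H \in unitmx.
  rewrite -row_free_unit -kermx_eq0; apply/eqP/matrixP => i j.
  have := inj (row i (kermx H)); rewrite -row_mul mulmx_ker row0.
  by move=> /(_ erefl) /rowP /(_ j); rewrite !mxE.
pose bv : 'rV[R]_k := \row_j (- L 'X^(k + j)).
pose v := bv *m invmx H.
have vH : v *m H = bv by rewrite /v mulmxKV.
exists ('X^k + qv v).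
have sq : (size (qv v) < size ('X^k : {poly R}))%N.
  by rewrite size_polyXn ltnS sqv.
split.
- by rewrite size_polyDl // size_polyXn.
- by rewrite lead_coefDl // lead_coefXn.
move=> Q hQ; rewrite -[Q]coefK poly_def mulr_sumr (lin_sum hL) big1 // => j _.
have jk : (j < k)%N := leq_trans (ltn_ord j) hQ.
rewrite -scalerAr (linZ hL) mulrDl (linD hL) -exprD.
have := qvX v (Ordinal jk); rewrite /= => ->; rewrite vH mxE /=.
by rewrite subrr mulr0.
Qed.

Lemma gauss k (a b : R) : spos L (2 * k) a b ->
  exists S : seq (R * R), [/\ size S = k, uniq (map fst S),
    (forall p, p \in S -> a < p.1 < b /\ 0 < p.2) & rep L (2 * k) S].
Proof.
move=> hp.
have [w [sw lw ow]] := ortho k a b hp.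
have wn0 : w != 0 by rewrite -lead_coef_eq0 lw oner_neq0.
have [Y [uY hY hs]] := signlem a b w.
have sYk : size Y = k.
  apply/eqP; rewrite eqn_leq; apply/andP; split.
    have := max_poly_roots wn0 _ uY; rewrite sw ltnS; apply.
    by apply/allP => y /hY [].
  rewrite leqNgt; apply/negP => sY.
  set q := \prod_(y <- Y) ('X - y%:P).
  have sq : size q = (size Y).+1 by rewrite size_prod_XsubC.
  have qn0 : q != 0 by apply: monic_neq0; exact: monic_prod_XsubC.
  have wq0 : L (w * q) = 0 by apply: ow; rewrite sq.
  have nz : w * q != 0 by rewrite mulf_neq0.
  have swq : (size (w * q)%R <= 2 * k)%N by rewrite size_mul // sw sq; lia.
  case: hs => hs.
    by have := hp _ swq hs nz; rewrite wq0 ltxx.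
  have p2 : forall x, a <= x <= b -> 0 <= (- (w * q)).[x].
    by move=> x xab; rewrite hornerN oppr_ge0; exact: hs.
  have s2 : (size (- (w * q))%R <= 2 * k)%N by rewrite size_opp.
  have nz2 : - (w * q) != 0 by rewrite oppr_eq0.
  by have := hp _ s2 p2 nz2; rewrite (linN hL) wq0 oppr0 ltxx.
pose l y := (\prod_(z <- rem y Y) (y - z))^-1 *: \prod_(z <- rem y Y) ('X - z%:P).
have lE y x : (l y).[x] = (\prod_(z <- rem y Y) (y - z))^-1 * \prod_(z <- rem y Y) (x - z).
  by rewrite /l hornerZ horner_prod; congr (_ * _); apply: eq_bigr => z _; rewrite hornerXsubC.
have ly y : y \in Y -> (l y).[y] = 1.
  move=> yY; rewrite lE mulVf //; rewrite prodf_seq_neq0; apply/allP => z zY /=.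
  rewrite subr_eq0; apply: contraTneq zY => <-; by rewrite mem_rem_uniqF.
have lz y z : y \in Y -> z \in Y -> z != y -> (l y).[z] = 0.
  move=> yY zY zy; rewrite lE; apply/eqP; rewrite mulf_eq0; apply/orP; right.
  rewrite prodf_seq_eq0; apply/hasP; exists z; last by rewrite subrr eqxx.
  by rewrite mem_rem_uniq // inE zy zY.
have sl y : y \in Y -> (size (l y) <= k)%N.
  move=> yY; apply: leq_trans (size_scale_leq _ _) _.
  have : (0 < size Y)%N by rewrite lt0n size_eq0; apply: contraTneq yY => ->.
  by rewrite size_prod_XsubC size_rem // sYk; lia.
have interp (r : {poly R}) : (size r <= k)%N -> r = \sum_(y <- Y) r.[y] *: l y.
  move=> sr; apply/eqP; rewrite -subr_eq0; apply/negPn/negP => nz.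
  have sD : (size (r - \sum_(y <- Y) r.[y] *: l y)%R <= k)%N.
    apply: leq_trans (size_polyD _ _) _; rewrite geq_max sr size_opp.
    rewrite big_seq; apply: (big_ind (fun p : {poly R} => (size p <= k)%N)).
    - by rewrite size_poly0.
    - by move=> p1 p2 h1 h2; apply: leq_trans (size_polyD _ _) _; rewrite geq_max h1 h2.
    - by move=> y yY; apply: leq_trans (size_scale_leq _ _) _; exact: sl.
  have := max_poly_roots nz _ uY; rewrite sYk => /(_ _) h.
  suff: (k < k)%N by rewrite ltnn.
  apply: leq_trans sD; apply: h; apply/allP => y yY.
  rewrite /root hornerD hornerN horner_sum (bigD1_seq y) //= hornerZ ly // mulr1.
  rewrite big1_seq ?addr0 ?subrr // => z /andP [zy zY].
  by rewrite hornerZ lz ?mulr0 // eq_sym.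
have quad (P : {poly R}) : (size P <= 2 * k)%N -> L P = \sum_(y <- Y) L (l y) * P.[y].
  move=> sP.
  have Pe := divp_eq P w.
  have sdiv : (size (P %/ w)%R <= k)%N.
    rewrite size_divp // sw succnK leq_subLR; apply: (leq_trans sP); lia.
  have sr : (size (P %% w)%R <= k)%N.
    by have := ltn_modp P w; rewrite wn0 sw ltnS.
  rewrite Pe (linD hL) mulrC ow // add0r.
  rewrite {1}(interp _ sr) (lin_sum hL); apply: eq_big_seq => y yY.
  rewrite (linZ hL) [RHS]mulrC; congr (_ * _).
  have rw : root w y by have [] := hY y yY.
  by rewrite hornerD hornerM (rootP rw) mul0r add0r.
exists [seq (y, L (l y)) | y <- Y]; split.
- by rewrite size_map.
- by rewrite -map_comp map_id.
- move=> p /mapP [y yY ->] /=; split; first by have [] := hY y yY.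
  have sl2 : (size (l y * l y)%R <= 2 * k)%N.
    by apply: leq_trans (size_polyMleq _ _) _; have := sl y yY; lia.
  have := quad (l y * l y) sl2.
  rewrite (bigD1_seq y) //= hornerM ly // mulr1 big1_seq ?addr0; last first.
    by move=> z /andP [zy zY]; rewrite hornerM lz // mulr0 mulr0.
  rewrite mulr1 => <-.
  apply: hp => //.
    by move=> x _; rewrite hornerM -expr2 sqr_ge0.
  rewrite mulf_eq0 orbb; apply/eqP => l0; have := ly y yY; rewrite l0 horner0.
  by move/eqP; rewrite eq_sym oner_eq0.
- by move=> P sP; rewrite quad // big_map.
Qed.
End Gauss.

Lemma peel (L : {poly R} -> R) (hL : linF L) (c e : R) (d : nat) (S : seq (R * R)) :
  c != 0 -> (forall p, p \in S -> p.1 != e) ->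
  rep (fun Q => L ((c *: ('X - e%:P)) * Q)) d S ->
  rep L d.+1 ((e, L 1 - \sum_(p <- S) p.2 / (c * (p.1 - e))) ::
              [seq (p.1, p.2 / (c * (p.1 - e))) | p <- S]).
Proof.
move=> c0 hS hr P sP.
set Q0 := (P - P.[e]%:P) %/ ('X - e%:P).
have eQ : Q0 * ('X - e%:P) = P - P.[e]%:P.
  by rewrite /Q0 divpK // dvdp_XsubCl /root hornerD hornerN hornerC subrr.
have hQ : P = P.[e] *: 1 + (c *: ('X - e%:P)) * (c^-1 *: Q0).
  rewrite -scalerAl -scalerAr scalerA mulfV // scale1r mulrC eQ.
  by rewrite -mul_polyC mulr1 addrC subrK.
have sQ : (size (c^-1 *: Q0) <= d)%N.
  apply: leq_trans (size_scale_leq _ _) _.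
  rewrite /Q0 size_divp ?polyXsubC_eq0 // size_XsubC succnK leq_subLR.
  apply: leq_trans (size_polyD _ _) _; rewrite size_opp geq_max.
  by rewrite (leq_trans sP) // (leq_trans (size_polyC_leq1 _)).
have Qy y : y != e -> Q0.[y] = (P.[y] - P.[e]) / (y - e).
  move=> ye; have := congr1 (fun p => p.[y]) eQ.
  rewrite hornerM hornerXsubC hornerD hornerN hornerC => <-.
  by rewrite mulfK // subr_eq0.
rewrite {1}hQ (linD hL) (linZ hL) (hr _ sQ) big_cons big_map /=.
have -> : \sum_(p <- S) p.2 * (c^-1 *: Q0).[p.1] =
   \sum_(p <- S) (p.2 / (c * (p.1 - e)) * P.[p.1] - p.2 / (c * (p.1 - e)) * P.[e]).
  apply: eq_big_seq => p pS; rewrite hornerZ Qy ?hS //.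
  have pe : p.1 - e != 0 by rewrite subr_eq0 hS.
  by field; rewrite pe c0.
rewrite sumrB -mulr_suml; ring.
Qed.

Definition sqp (S : seq (R * R)) : {poly R} :=
  (\prod_(p <- S) ('X - p.1%:P)) * (\prod_(p <- S) ('X - p.1%:P)).

Lemma sqp_size S : size (sqp S) = (2 * size S).+1.
Proof.
rewrite /sqp size_mul ?size_prod_XsubC; last first.
- by apply: monic_neq0; exact: monic_prod_XsubC.
- by apply: monic_neq0; exact: monic_prod_XsubC.
by rewrite /=; lia.
Qed.

Lemma sqp_neq0 S : sqp S != 0.
Proof. by rewrite /sqp mulf_neq0 //; apply: monic_neq0; exact: monic_prod_XsubC. Qed.

Lemma sqp_horner S x : (sqp S).[x] = (\prod_(p <- S) (x - p.1)) ^+ 2.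
Proof.
rewrite /sqp hornerM horner_prod expr2; congr (_ * _);
  by apply: eq_bigr => p _; rewrite hornerXsubC.
Qed.

Lemma sqp_ge0 S x : 0 <= (sqp S).[x].
Proof. by rewrite sqp_horner sqr_ge0. Qed.

Lemma sqp_root S p : p \in S -> (sqp S).[p.1] = 0.
Proof.
move=> pS; rewrite sqp_horner; apply/eqP; rewrite sqrf_eq0 prodf_seq_eq0.
by apply/hasP; exists p => //=; rewrite subrr eqxx.
Qed.

Lemma sqp_pos S x : (forall p, p \in S -> p.1 != x) -> 0 < (sqp S).[x].
Proof.
move=> h; rewrite sqp_horner lt_def sqr_ge0 andbT sqrf_eq0 prodf_seq_neq0.
by apply/allP => p pS /=; rewrite subr_eq0 eq_sym h.
Qed.

Lemma rep_vanish (L : {poly R} -> R) d W g S P : rep L d ((g, W) :: S) ->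
  (size P <= d)%N -> (forall p, p \in S -> P.[p.1] = 0) -> L P = W * P.[g].
Proof.
move=> hr sP h0; rewrite hr // big_cons /= big1_seq ?addr0 // => p [/= pS].
by rewrite h0 // mulr0.
Qed.

Arguments rep_vanish {L d W g S P}.
Arguments peel {L} hL {c e d S}.

Lemma radau (L : {poly R} -> R) (hL : linF L) m (a b g : R) : g < a ->
  spos L (2 * m).+1 a b ->
  exists W S, [/\ 0 < W, size S = m, (forall p, p \in S -> a < p.1 < b /\ 0 < p.2)
                & rep L (2 * m).+1 ((g, W) :: S)].
Proof.
move=> ga hp.
pose Lg := fun Q => L ((1 *: ('X - g%:P)) * Q).
have hLg : linF Lg.
  by move=> c P Q; rewrite /Lg mulrDr (linD hL) -scalerAr (linZ hL).
have hpg : spos Lg (2 * m) a b.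
  move=> Q sQ hQ Qn0; apply: hp.
  - apply: leq_trans (size_polyMleq _ _) _.
    by rewrite scale1r size_XsubC add2n /= ltnS.
  - move=> x xab; rewrite hornerM hornerZ hornerXsubC mul1r mulr_ge0 ?hQ //.
    by rewrite subr_ge0; case/andP: xab => ax _; exact: ltW (lt_le_trans ga ax).
  - by rewrite mulf_neq0 // scale1r polyXsubC_eq0.
have [S0 [sS0 uS0 hS0 rS0]] := @gauss Lg hLg m a b hpg.
have hne : forall p, p \in S0 -> p.1 != g.
  move=> p /hS0 [/andP [ap _] _]; by rewrite gt_eqF // (lt_trans ga ap).
have := @peel L hL 1 g (2 * m) S0 (oner_neq0 R) hne rS0.
set W := L 1 - _; set S := map _ _ => rS.
exists W, S; split.
- have E : L (sqp S0) = W * (sqp S0).[g].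
    apply: (rep_vanish rS); first by rewrite sqp_size sS0.
    by move=> p /mapP [q qS0 ->] /=; exact: sqp_root.
  have T0 : 0 < (sqp S0).[g] by apply: sqp_pos.
  rewrite -(pmulr_lgt0 _ T0) -E; apply: hp.
  + by rewrite sqp_size sS0.
  + by move=> x _; exact: sqp_ge0.
  + exact: sqp_neq0.
- by rewrite size_map.
- move=> p /mapP [q qS0 ->] /=; have [qab q2] := hS0 q qS0; split => //.
  rewrite mul1r divr_gt0 // subr_gt0; case/andP: qab => aq _; exact: lt_trans ga aq.
- exact: rS.
Qed.

Arguments radau {L} hL m {a b g}.

Lemma radau_bound (L : {poly R} -> R) (hL : linF L) m (a b : R) : 0 < a ->
  spos L (2 * m).+1 a b -> exists W0, 0 < W0 /\ forall c, 0 < c < a ->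
  exists W S, [/\ W0 <= W, size S = m, (forall p, p \in S -> a < p.1 < b /\ 0 < p.2)
                & rep L (2 * m).+1 ((c, W) :: S)].
Proof.
move=> a0 hp.
have [W0 [S0 [W00 sS0 hS0 rS0]]] := radau hL m a0 hp.
exists W0; split => // c cc; case/andP: (cc) => c0 ca.
have [W [S [W1 sS hS rS]]] := radau hL m ca hp.
exists W, S; split => //.
have sT : (size (sqp S) <= (2 * m).+1)%N by rewrite sqp_size sS.
have E : L (sqp S) = W * (sqp S).[c].
  by apply: (rep_vanish rS sT) => p pS; exact: sqp_root.
have Tc : 0 < (sqp S).[c].
  apply: sqp_pos => p /hS [/andP [ap _] _]; rewrite gt_eqF //; exact: lt_trans ca ap.
have E0 : W0 * (sqp S).[0] <= L (sqp S).
  rewrite rS0 // big_cons /= lerDl big_seq; apply: sumr_ge0 => p pS0.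
  apply: mulr_ge0; last exact: sqp_ge0.
  by have [_ /ltW] := hS0 p pS0.
have T0c : (sqp S).[c] <= (sqp S).[0].
  rewrite !sqp_horner -!prodrXl big_seq [X in _ <= X]big_seq; apply: ler_prod => p pS.
  have [/andP [ap _] _] := hS p pS.
  have cp : c < p.1 by exact: lt_trans ca ap.
  rewrite sqr_ge0 /=; nra.
rewrite -(ler_pM2r Tc) -E; apply: le_trans E0.
by apply: ler_wpM2l => //; exact: ltW.
Qed.

Arguments radau_bound {L} hL m {a b}.

Lemma key (L : {poly R} -> R) (hL : linF L) n (a b : R) : 0 < a -> a < b ->
  spos L n.+1 a b ->
  exists w0, 0 < w0 /\ forall c, 0 < c < a -> exists S : seq (R * R),
   [/\ rep L n.+1 S, (forall p, p \in S -> c <= p.1 <= b /\ 0 <= p.2)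
     & w0 / c <= \sum_(p <- S) p.2 / p.1].
Proof.
move=> a0 ab; have := odd_double_half n; rewrite -mul2n; set m := n./2.
case: (odd n) => /= <- hp; last first.
  rewrite add0n in hp *.
  have [W0 [W00 hW]] := radau_bound hL m a0 hp.
  exists W0; split => // c cc; case/andP: (cc) => c0 ca.
  have [W [S [W1 _ hS rS]]] := hW c cc.
  exists ((c, W) :: S); split => //.
  - move=> p; rewrite in_cons => /orP [/eqP -> /=|/hS [/andP [ap pb] p2]].
      by rewrite lexx (ltW (lt_trans ca ab)) (le_trans (ltW W00) W1).
    by rewrite (ltW p2) (ltW (lt_trans ca ap)) (ltW pb).
  - rewrite big_cons /=; apply: ler_wpDr.
      rewrite big_seq; apply: sumr_ge0 => p /hS [/andP [ap _] p2].
      by rewrite divr_ge0 // ltW // (lt_trans a0 ap).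
    by apply: ler_wpM2r => //; rewrite invr_ge0 ltW.
rewrite add1n in hp *.
pose Lb := fun Q => L (((-1) *: ('X - b%:P)) * Q).
have hLb : linF Lb.
  by move=> c P Q; rewrite /Lb mulrDr (linD hL) -scalerAr (linZ hL).
have hpb : spos Lb (2 * m).+1 a b.
  move=> Q sQ hQ Qn0; apply: hp.
  - apply: leq_trans (size_polyMleq _ _) _.
    by rewrite size_scale ?oppr_eq0 ?oner_eq0 // size_XsubC add2n /= ltnS.
  - move=> x xab; rewrite hornerM hornerZ hornerXsubC mulr_ge0 ?hQ //.
    by case/andP: xab => _ xb; rewrite mulN1r oppr_ge0 subr_le0.
  - by rewrite mulf_neq0 // scaler_eq0 oppr_eq0 oner_eq0 polyXsubC_eq0.
have [W0 [W00 hW]] := radau_bound hLb m a0 hpb.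
exists (W0 / b); split; first by rewrite divr_gt0 // (lt_trans a0 ab).
move=> c cc; case/andP: (cc) => c0 ca.
have cb : c < b := lt_trans ca ab.
have [W [S [W1 sS hS rS]]] := hW c cc.
have hne : forall p, p \in (c, W) :: S -> p.1 != b.
  move=> p; rewrite in_cons => /orP [/eqP -> /=|/hS [/andP [_ pb] _]].
    by rewrite lt_eqF.
  by rewrite lt_eqF.
have m10 : (-1 : R) != 0 by rewrite oppr_eq0 oner_eq0.
have := @peel L hL (-1) b (2 * m).+1 ((c, W) :: S) m10 hne rS.
set V := L 1 - _; set S1 := map _ _ => rL.
have wpos : forall p, p \in S1 -> c <= p.1 <= b /\ 0 <= p.2.
  move=> p /mapP [q]; rewrite in_cons => /orP [/eqP -> -> /=|qS ->] /=.
    rewrite lexx (ltW cb) mulN1r opprB divr_ge0 // ?subr_ge0 ?(ltW cb) //.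
    exact: le_trans (ltW W00) W1.
  have [/andP [aq qb] q2] := hS q qS.
  rewrite (ltW (lt_trans ca aq)) (ltW qb) mulN1r opprB divr_ge0 ?ltW //.
  by rewrite subr_gt0.
have Vpos : 0 < V.
  pose T := ('X - c%:P) * sqp S.
  have sT : (size T <= (2 * m).+2)%N.
    by rewrite /T size_mul ?polyXsubC_eq0 ?sqp_neq0 // size_XsubC sqp_size sS add2n.
  have E : L T = V * T.[b].
    apply: (rep_vanish rL sT) => p /mapP [q]; rewrite in_cons.
    move=> /orP [/eqP -> -> /=|qS ->] /=.
      by rewrite /T hornerM hornerXsubC subrr mul0r.
    by rewrite /T hornerM sqp_root // mulr0.
  have Tb : 0 < T.[b].
    rewrite /T hornerM hornerXsubC mulr_gt0 ?subr_gt0 //.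
    by apply: sqp_pos => p /hS [/andP [_ pb] _]; rewrite lt_eqF.
  rewrite -(pmulr_lgt0 _ Tb) -E; apply: hp => //.
    move=> x /andP [ax _]; rewrite /T hornerM hornerXsubC mulr_ge0 ?sqp_ge0 //.
    by rewrite subr_ge0 ltW // (lt_le_trans ca ax).
  by rewrite /T mulf_neq0 ?polyXsubC_eq0 ?sqp_neq0.
exists ((b, V) :: S1); split => //.
  move=> p; rewrite in_cons => /orP [/eqP -> /=|/wpos //].
  by rewrite (ltW cb) lexx ltW.
rewrite big_cons /S1 big_map big_cons /=.
rewrite addrA; apply: ler_wpDr.
  rewrite big_seq; apply: sumr_ge0 => p pS.
  have [/andP [ap pb] p2] := hS p pS.
  rewrite mulN1r opprB; apply: divr_ge0; last by rewrite ltW // (lt_trans a0 ap).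
  by rewrite divr_ge0 ?ltW // subr_gt0.
apply: ler_wpDl; first by rewrite divr_ge0 ?ltW // (lt_trans c0 cb).
apply: ler_wpM2r; first by rewrite invr_ge0 ltW.
rewrite mulN1r opprB; apply: ler_pM; first exact: ltW.
- by rewrite invr_ge0 ltW // (lt_trans c0 cb).
- exact: W1.
rewrite lef_pV2 ?posrE ?subr_gt0 ?(lt_trans c0 cb) //.
by rewrite gerDl oppr_le0 ltW.
Qed.

End Alg.
Arguments linF {R}. Arguments spos {R}. Arguments rep {R}. Arguments key {R L}.

Lemma atomic (R : realType) (S : seq (R * R)) (c b : R) : 0 < c ->
  (forall p, p \in S -> c <= p.1 <= b /\ 0 <= p.2) ->
  exists mu : {measure set R -> \bar R}, mu (~` `[c, b]) = 0%E /\
   forall f : R -> R, measurable_fun `[c, b] f -> (forall x, c <= x <= b -> 0 <= f x) ->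
   (\int[mu]_(x in `[c, b]) (f x)%:E = (\sum_(p <- S) p.2 * f p.1)%:E)%E.
Proof.
move=> c0 hS.
pose x i := (nth (0, 0) S i).1.
pose w i := (nth (0, 0) S i).2.
pose m_ : {measure set R -> \bar R}^nat := fun i => mscale (@NngNum R `|w i| (normr_ge0 _)) (\d_(x i)).
exists (msum m_ (size S)); split.
  rewrite /= /msum big1 // => i _; rewrite /m_ /= /mscale /= diracE.
  have hx : c <= x i <= b by have [] := hS _ (mem_nth (0, 0) (ltn_ord i)).
  rewrite memNset ?mule0 //= => /(_ _); apply; by rewrite /= in_itv /= hx.
move=> f mf f0.
have mE : measurable_fun `[c, b] (EFin \o f) by exact/measurable_EFinP.
have f0' : forall y, `[c, b]%classic y -> (0 <= (f y)%:E)%E.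
  by move=> y; rewrite /= in_itv /= => /f0; rewrite lee_fin.
rewrite ge0_integral_measure_sum //.
under eq_bigr => i _.
  rewrite /m_ ge0_integral_mscale // integral_dirac //= diracE.
  have hx : c <= x i <= b by have [] := hS _ (mem_nth (0, 0) (ltn_ord i)).
  rewrite mem_set; last by rewrite /= in_itv /= hx.
  rewrite mul1e -EFinM.
  over.
rewrite sumEFin; congr (_%:E).
rewrite (big_nth (0, 0)) big_mkord; apply: eq_bigr => i _.
have [_ w0] := hS _ (mem_nth (0, 0) (ltn_ord i)).
by rewrite /w /x ger0_norm.
Qed.

Theorem lemma5p2 (R : realType) (n : nat) (s : 'I_n.+1 -> R) :
  (forall k : 'I_n.+1, 0 <= s k) ->
  strictly_pos_on_pos s ->
  T_infty s = +oo%E.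
Proof.
move=> _ [a [b [a0 [ab hpos]]]].
have hL : linF (sigma s).
  move=> c P Q; rewrite /sigma mulr_sumr -big_split; apply: eq_bigr => k _.
  by rewrite coefD coefZ /= mulrDl mulrA.
have hp : spos (sigma s) n.+1 a b.
  by move=> P sP P0 Pn0; have [_] := hpos P sP P0; apply.
have [w0 [w00 hw]] := key hL n a b a0 ab hp.
have sX (k : 'I_n.+1) : sigma s 'X^k = s k.
  rewrite /sigma (bigD1 k) //= coefXn eqxx mul1r big1 ?addr0 // => i ik.
  have ik' : (i : nat) != k := ik.
  by rewrite coefXn (negbTE ik') mul0r.
have lb : forall M : R, (M%:E <= T_infty s)%E.
  move=> M.
  pose c := Num.min (a / 2) (w0 / (`|M| + 1)).
  have M1 : 0 < `|M| + 1 by rewrite ltr_pwDr.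
  have c0 : 0 < c by rewrite lt_min divr_gt0 // divr_gt0.
  have ca : c < a.
    have cle1 : c <= a / 2 by rewrite /c ge_min lexx.
    by apply: le_lt_trans cle1 _; rewrite ltr_pdivrMr //; lra.
  have cle : c <= w0 / (`|M| + 1) by rewrite /c ge_min lexx orbT.
  have cc : 0 < c < a by rewrite c0 ca.
  have cb : c < b := lt_trans ca ab.
  have [S [rS hS Ssum]] := hw c cc.
  have [mu [mu0 hmu]] := @atomic R S c b c0 hS.
  apply: (@le_trans _ _ (T_ab s c b)); last first.
    by apply: ereal_sup_ubound; exists (c, b) => //=.
  apply: (@le_trans _ _ ((\sum_(p <- S) p.2 / p.1)%:E)).
    rewrite lee_fin; apply: le_trans Ssum.
    rewrite ler_pdivlMr //.
    have : c * (`|M| + 1) <= w0 by rewrite -ler_pdivlMr.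
    have := ler_norm M; nra.
  apply: ereal_sup_ubound; exists mu.
    split => // k; rewrite (hmu (fun x => x ^+ k)) //; last first.
      by move=> x /andP [cx _]; rewrite exprn_ge0 // ltW // (lt_le_trans c0 cx).
    by rewrite -sX rS ?size_polyXn //; congr (_%:E); apply: eq_bigr => p _; rewrite hornerXn.
  rewrite (hmu (fun x => x^-1)) //.
    have mi : measurable_fun `](0 : R), +oo[%classic (@GRing.inv R).
      apply: open_continuous_measurable_fun; first exact: interval_open.
      move=> x; rewrite inE /= in_itv /= andbT => x0; apply: inv_continuous.
      by rewrite gt_eqF.
    apply: (measurable_funS _ _ mi) => //.
    by move=> x /=; rewrite !in_itv /= andbT => /andP [cx _]; exact: lt_le_trans c0 cx.
  by move=> x /andP [cx _]; rewrite invr_ge0 ltW // (lt_le_trans c0 cx).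
case E : (T_infty s) => [r| |] //.
  by have := lb (r + 1); rewrite E lee_fin => h; exfalso; lra.
by have := lb 0; rewrite E.
Qed.
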